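(* Let $X$ be a real Banach space, let $A\subset X\times X^*$ be self-cancelling and suppose that $A^\vdash$ is maximal monotone. Then for any $(x_0,x_0^* )\in X\times X^*$ the operator $T=A^\vdash+\{(x_0,x_0^* )\}=\{(y+x_0,y^*+x_0^* )\mid (y,y^* )\in A^\vdash\}$ is non-enlargeable; equivalently, $\{(x,x^* )\mid \varphi_T(x,x^* )<\infty\}=T$.
   Context: $\langle x,x^*\rangle=x^*(x)$. Operators $X\rightrightarrows X^*$ are subsets of $X\times X^*$; monotone means $\langle x-y,x^*-y^*\rangle\ge0$ on pairs in the operator, maximal monotone means monotone and maximal under inclusion among monotone operators. $A$ is self-cancelling if it is a linear subspace of $X\times X^*$ with $\langle x,x^*\rangle=0$ for all $(x,x^* )\in A$. $B^\vdash=\{(y,y^* )\mid \langle x,y^*\rangle+\langle y,x^*\rangle=0\ \forall (x,x^* )\in B\}$. For maximal monotone $T$ and $\varepsilon\ge0$, $T^\varepsilon=\{(x,x^* )\mid \langle x-y,x^*-y^*\rangle\ge-\varepsilon\ \forall (y,y^* )\in T\}$, and $T$ is non-enlargeable if $T^\varepsilon=T$ for all $\varepsilon\ge0$. The Fitzpatrick function is $\varphi_T(x,x^* )=\sup_{(y,y^* )\in T}\big(\langle x,y^*\rangle+\langle y,x^*\rangle-\langle y,y^*\rangle\big)$. *)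

(* Defs.v *)
From HB Require Import structures.
From mathcomp Require Import all_boot all_order all_algebra.
From mathcomp Require Import all_classical all_reals all_analysis.
Set Implicit Arguments. Unset Strict Implicit. Unset Printing Implicit Defensive.
Import Order.TTheory GRing.Theory Num.Theory.
Import numFieldNormedType.Exports.
Local Open Scope classical_set_scope.
Local Open Scope ring_scope.

(* Topological dual X^* of a real normed space X: continuous linear functionals,
   represented as functions X -> R; the pairing <x,x*> is x* x. *)
Definition dualsp (R : realType) (X : normedModType R) : set (X -> R) :=
  [set f | (forall (a : R) (x y : X), f (a *: x + y) = a * f x + f y) /\ continuous f].

(* An operator X ⇉ X^* is a subset of X × X^*. *)
Definition in_XXs (R : realType) (X : normedModType R) (T : set (X * (X -> R))) :=
  forall p, T p -> dualsp p.2.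

Definition monotone_op (R : realType) (X : normedModType R) (T : set (X * (X -> R))) :=
  in_XXs T /\
  forall p q, T p -> T q -> 0 <= p.2 (p.1 - q.1) - q.2 (p.1 - q.1).

Definition maximal_monotone (R : realType) (X : normedModType R)
  (T : set (X * (X -> R))) :=
  monotone_op T /\ forall S, monotone_op S -> T `<=` S -> S = T.

Definition self_cancelling (R : realType) (X : normedModType R)
  (A : set (X * (X -> R))) :=
  [/\ in_XXs A, A (0, fun _ => 0),
      (forall p q, A p -> A q -> A (p.1 + q.1, fun z => p.2 z + q.2 z)),
      (forall (a : R) p, A p -> A (a *: p.1, fun z => a * p.2 z)) &
      (forall p, A p -> p.2 p.1 = 0)].

Definition perp_op (R : realType) (X : normedModType R) (B : set (X * (X -> R))) :
  set (X * (X -> R)) :=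
  [set q | dualsp q.2 /\ forall p, B p -> q.2 p.1 + p.2 q.1 = 0].

Definition translate_op (R : realType) (X : normedModType R) (B : set (X * (X -> R)))
  (x0 : X) (x0s : X -> R) : set (X * (X -> R)) :=
  [set r | exists q, B q /\ r = (q.1 + x0, fun z => q.2 z + x0s z)].

Definition enlargement (R : realType) (X : normedModType R) (T : set (X * (X -> R)))
  (eps : R) : set (X * (X -> R)) :=
  [set p | dualsp p.2 /\
           forall q, T q -> - eps <= p.2 (p.1 - q.1) - q.2 (p.1 - q.1)].

Definition non_enlargeable (R : realType) (X : normedModType R) (T : set (X * (X -> R))) :=
  forall eps : R, 0 <= eps -> enlargement T eps = T.

Definition fitzpatrick (R : realType) (X : normedModType R) (T : set (X * (X -> R)))
  (p : X * (X -> R)) : \bar R :=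
  ereal_sup [set ((q.2 p.1 + p.2 q.1 - q.2 q.1)%:E) | q in T].

(* Main.v *)
Require Import Defs.
From HB Require Import structures.
From mathcomp Require Import all_boot all_order all_algebra.
From mathcomp Require Import all_classical all_reals all_analysis.
From mathcomp Require Import ring lra.
Import Order.TTheory GRing.Theory Num.Theory.
Local Open Scope classical_set_scope.
Local Open Scope ring_scope.

Section S.
Variables (R : realType) (X : completeNormedModType R).

Lemma dual0 {f : X -> R} : dualsp f -> f 0 = 0.
Proof.
move=> [hl _]; have := hl 1 0 0; rewrite scaler0 addr0 mul1r => /eqP.
by rewrite -subr_eq0 opprD addrA subrr add0r oppr_eq0 => /eqP.
Qed.

Lemma dualD {f : X -> R} {x y} : dualsp f -> f (x + y) = f x + f y.
Proof. by move=> [hl _]; have := hl 1 x y; rewrite scale1r mul1r. Qed.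

Lemma dualZ {f : X -> R} {a x} : dualsp f -> f (a *: x) = a * f x.
Proof. move=> hf; have := (proj1 hf) a x 0; rewrite addr0 (dual0 hf) addr0. by []. Qed.

Lemma dualB {f : X -> R} {x y} : dualsp f -> f (x - y) = f x - f y.
Proof.
move=> hf; rewrite (dualD hf) -scaleN1r (dualZ hf); lra.
Qed.

Lemma dual_add (f g : X -> R) : dualsp f -> dualsp g -> dualsp (fun z => f z + g z).
Proof.
move=> hf hg; split.
  by move=> a x y; rewrite (proj1 hf) (proj1 hg); ring.
move=> x; exact: (continuousD (proj2 hf x) (proj2 hg x)).
Qed.

Lemma dual_sub (f g : X -> R) : dualsp f -> dualsp g -> dualsp (fun z => f z - g z).
Proof.
move=> hf hg; split.
  by move=> a x y; rewrite (proj1 hf) (proj1 hg); ring.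
move=> x; exact: (continuousB (proj2 hf x) (proj2 hg x)).
Qed.

Lemma lin_bound (K C c : R) : (forall t, K <= C + t * c) -> c = 0.
Proof.
move=> h; case: (eqVneq c 0) => // hc; exfalso.
have := h ((K - C - 1) / c); rewrite divfK // => H; suff : (0 < 0 :> R) by rewrite ltxx. lra.
Qed.

Variable A : set (X * (X -> R)).
Hypothesis sc : self_cancelling A.

Lemma A_sub_B : A `<=` perp_op A.
Proof.
case: sc => hd _ hadd _ hsc a ha; split; first exact: hd.
move=> p hp; have := hsc _ (hadd _ _ ha hp) => /=.
rewrite (dualD (hd _ ha)) (dualD (hd _ hp)) (hsc _ ha) (hsc _ hp); lra.
Qed.

Hypothesis mon : monotone_op (perp_op A).
Variables (x0 : X) (x0s : X -> R).
Hypothesis hx0 : dualsp x0s.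

Let T := translate_op (perp_op A) x0 x0s.

Lemma T_dual {q} : T q -> dualsp q.2.
Proof. by move=> [b [[hb _] ->]] /=; apply: dual_add. Qed.

Lemma T_mon {p q} : T p -> T q -> 0 <= p.2 (p.1 - q.1) - q.2 (p.1 - q.1).
Proof.
move=> [b [hb ->]] [c [hc ->]] /=.
have -> : b.1 + x0 - (c.1 + x0) = b.1 - c.1.
  by rewrite opprD addrACA subrr addr0.
have := (proj2 mon) _ _ hb hc; lra.
Qed.

Lemma enl_sub eps : enlargement T eps `<=` T.
Proof.
move=> p [hp h].
case: sc => hd _ _ hsca hsc.
have hB : perp_op A (p.1 - x0, fun z => p.2 z - x0s z).
  split; first exact: dual_sub.
  move=> a ha /=.
  have hda := hd _ ha.
  apply: (@lin_bound (- eps) (p.2 p.1 - p.2 x0 - x0s p.1 + x0s x0)).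
  move=> t.
  have hta := hsca (- t) _ ha.
  have := h _ (ex_intro _ _ (conj (A_sub_B _ hta) erefl)) => /=.
  rewrite !(dualB hp) !(dualD hp) !(dualZ hp).
  rewrite !(dualB hx0) !(dualD hx0) !(dualZ hx0).
  rewrite !(dualB hda) !(dualD hda) !(dualZ hda) (hsc _ ha).
  move=> H; apply: (le_trans H); rewrite le_eqVlt; apply/orP; left; apply/eqP; ring.
exists (p.1 - x0, fun z => p.2 z - x0s z); split => //=.
case: p {hp h hB} => p1 p2 /=; congr pair; first by rewrite subrK.
by apply: funext => z; rewrite subrK.
Qed.

Lemma enl_eq eps : 0 <= eps -> enlargement T eps = T.
Proof.
move=> he; apply/seteqP; split; first exact: enl_sub.
move=> p hp; split; first exact: T_dual.
move=> q hq; have := T_mon hp hq; lra.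
Qed.

Lemma fitz_eq : [set p | dualsp p.2 /\ (fitzpatrick T p < +oo)%E] = T.
Proof.
apply/seteqP; split.
  move=> p [hp hf].
  have [M hM] : exists M : R, (fitzpatrick T p <= M%:E)%E.
    move: hf; case: (fitzpatrick T p) => [r| |] // _.
      by exists r.
    by exists 0; rewrite leNye.
  apply: (@enl_sub `|M - p.2 p.1|); split => // q hq.
  have hq2 := T_dual hq.
  have : ((q.2 p.1 + p.2 q.1 - q.2 q.1)%:E <= M%:E)%E.
    apply: le_trans hM; apply: ereal_sup_ubound; by exists q.
  rewrite lee_fin !(dualB hp) !(dualB hq2) => H.
  have := ler_norm (M - p.2 p.1); lra.
move=> p hp; split; first exact: T_dual.
apply: (@le_lt_trans _ _ (p.2 p.1)%:E); last exact: ltry.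
apply: ge_ereal_sup => _ [q hq <-].
have := T_mon hp hq.
rewrite lee_fin !(dualB (T_dual hp)) !(dualB (T_dual hq)); lra.
Qed.

End S.

Theorem lemma3 (R : realType) (X : completeNormedModType R)
  (A : set (X * (X -> R))) (x0 : X) (x0s : X -> R) :
  self_cancelling A ->
  maximal_monotone (perp_op A) ->
  dualsp x0s ->
  non_enlargeable (translate_op (perp_op A) x0 x0s) /\
  [set p | dualsp p.2 /\
           (fitzpatrick (translate_op (perp_op A) x0 x0s) p < +oo)%E]
  = translate_op (perp_op A) x0 x0s.
Proof.
move=> sc [mon _] hx0; split.
  by move=> eps he; apply: enl_eq.
exact: fitz_eq.
Qed.
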